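(* For every signaling scheme $\mathcal{Z}$ for $\mathcal{D}$ there exists an efficient signaling scheme $\mathcal{Z}^E$ for $\mathcal{D}$ such that: (1) $cs_{v_i}(\mathcal{Z}^E)=cs_{v_i}(\mathcal{Z})$ for every $i\in[n]$; (2) $\mathcal{Z}^E$ consists of at most $n$ signals, whose lowest supports (smallest values with nonzero mass) are pairwise distinct.
   Context: Values and prior. $0<v_1<\dots<v_n$ are reals, and $\mathcal{D}$ is a distribution on $\{v_1,\dots,v_n\}$ with $f_{\mathcal{D}}(v_i)>0$. Signals and pricing. A signal is a distribution $S$ on these values, with $G_S(p)=\Pr_{v\sim S}[v\ge p]$. The seller posts $p^*_S$, the smallest $v$ in the support of $S$ maximizing $v\,G_S(v)$. The surplus of value $v$ is $cs_v(S)=\mathbb{1}[v\ge p^*_S](v-p^*_S)$. Signaling schemes. A signaling scheme is $\mathcal{Z}=\{(S_q,\gamma_q)\}$ with $\gamma_q\ge0$, $\sum\gamma_q=1$ and $\sum_q\gamma_q f_{S_q}=f_{\mathcal{D}}$. Its expected consumer surplus at $v_i$ is $cs_{v_i}(\mathcal{Z})=\sum_q cs_{v_i}(S_q)\gamma_q f_{S_q}(v_i)/f_{\mathcal{D}}(v_i)$. The scheme is efficient if for every signal $S_q$, $p^*_{S_q}$ is the smallest value in the support of $S_q$. *)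

(* Defs.v *)
From mathcomp Require Import all_boot all_order all_algebra.
Set Implicit Arguments. Unset Strict Implicit. Unset Printing Implicit Defensive.
Import Order.TTheory GRing.Theory Num.Theory.
Local Open Scope ring_scope.

Section Pricing.
Variables (R : realFieldType) (n : nat).

(* A signal: a probability mass function s on the values v_0 < ... < v_{n-1},
   given by its masses s i = f_S(v_i). *)
Definition signal := {ffun 'I_n -> R}.

Definition is_signal (s : signal) : Prop :=
  (forall i, 0 <= s i) /\ \sum_i s i = 1.

Definition G (v : 'I_n -> R) (s : signal) (p : R) : R :=
  \sum_(j | p <= v j) s j.

Definition revenue (v : 'I_n -> R) (s : signal) (i : 'I_n) : R :=
  v i * G v s (v i).

Definition is_price_idx (v : 'I_n -> R) (s : signal) (i : 'I_n) : bool :=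
  [&& 0 < s i,
      [forall j, (0 < s j) ==> (revenue v s j <= revenue v s i)] &
      [forall j, ((0 < s j) && (v j < v i)) ==> (revenue v s j < revenue v s i)]].

(* p*_S (defaults to 0 if undefined, which never happens for a signal) *)
Definition price (v : 'I_n -> R) (s : signal) : R :=
  if [pick i | is_price_idx v s i] is Some i then v i else 0.

Definition cs (v : 'I_n -> R) (s : signal) (x : R) : R :=
  if price v s <= x then x - price v s else 0.

(* smallest value in the support of s (0 if the support is empty) *)
Definition lowest_supp (v : 'I_n -> R) (s : signal) : R :=
  if [pick i | (0 < s i) && [forall j, (0 < s j) ==> (v i <= v j)]] is Some i
  then v i else 0.

Definition scheme := seq (signal * R).

Definition is_scheme (f : 'I_n -> R) (Z : scheme) : Prop :=
  (forall q, q \in Z -> 0 <= q.2 /\ is_signal q.1) /\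
  \sum_(q <- Z) q.2 = 1 /\
  (forall i, \sum_(q <- Z) q.2 * q.1 i = f i).

Definition cs_scheme (v f : 'I_n -> R) (Z : scheme) (i : 'I_n) : R :=
  \sum_(q <- Z) cs v q.1 (v i) * q.2 * q.1 i / f i.

Definition efficient (v : 'I_n -> R) (Z : scheme) : Prop :=
  forall q, q \in Z -> price v q.1 = lowest_supp v q.1.

End Pricing.

(* Main.v *)
Require Import Defs.
From mathcomp Require Import all_boot all_order all_algebra.
Import Order.TTheory GRing.Theory Num.Theory.
Local Open Scope ring_scope.

Module Aux.
Set Implicit Arguments. Unset Strict Implicit. Unset Printing Implicit Defensive.
Section S.
Variables (R : realFieldType) (n : nat) (v : 'I_n -> R).
Hypothesis vpos : forall i, 0 < v i.
Hypothesis vmono : forall i j : 'I_n, (i < j)%N -> v i < v j.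

Lemma vle i j : (v i <= v j) = (i <= j)%N.
Proof.
case: (ltngtP i j) => h.
- by rewrite (ltW (vmono h)).
- by rewrite leNgt (vmono h).
- by rewrite (val_inj h) lexx.
Qed.
Lemma vlt i j : (v i < v j) = (i < j)%N.
Proof. by rewrite ltNge vle ltnNge. Qed.
Lemma veq i j : (v i == v j) = (i == j).
Proof. by rewrite eq_le !vle -eqn_leq. Qed.

Lemma Gidx (s : signal R n) l : G v s (v l) = \sum_(i : 'I_n | (l <= i)%N) s i.
Proof. by apply: eq_bigl => i; rewrite vle. Qed.

Lemma price_spec (s : signal R n) k :
  is_price_idx v s k -> [/\ 0 < s k, forall j, 0 < s j -> revenue v s j <= revenue v s k &
     forall j, 0 < s j -> (j < k)%N -> revenue v s j < revenue v s k].
Proof.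
case/and3P => h1 /forallP h2 /forallP h3; split => // j hj.
  exact: (implyP (h2 j) hj).
by move=> hjk; apply: (implyP (h3 j)); rewrite hj vlt.
Qed.

Lemma price_exists (s : signal R n) : is_signal s -> exists k, is_price_idx v s k.
Proof.
case=> s0 s1.
have [i0 hi0] : exists i, 0 < s i.
  apply/existsP; apply: contraT; rewrite negb_exists => /forallP h.
  have : \sum_i s i = 0 by apply: big1 => i _; apply/eqP; rewrite eq_le s0 andbT leNgt; exact: (h i).
  by rewrite s1 => /eqP; rewrite oner_eq0.
case: (@arg_maxP _ _ _ i0 (fun i => 0 < s i) (revenue v s) hi0) => i1 hi1 hmax.
pose P j := (0 < s j) && (revenue v s j == revenue v s i1).
have P1 : P i1 by rewrite /P hi1 eqxx.
case: (@arg_minnP _ i1 P (fun j : 'I_n => nat_of_ord j) P1) => k /andP[hk /eqP hrk] hmin.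
exists k; apply/and3P; split => //.
  by apply/forallP => j; apply/implyP => hj; rewrite hrk; exact: hmax.
apply/forallP => j; apply/implyP => /andP[hj]; rewrite vlt => hjk.
have hm : revenue v s j <= revenue v s i1 by exact: hmax.
rewrite lt_neqAle hrk hm andbT; apply/negP => /eqP e.
by have := hmin j; rewrite /P hj e eqxx /= => /(_ isT); rewrite leqNgt hjk.
Qed.

Lemma G_ge0 (s : signal R n) x : (forall i, 0 <= s i) -> 0 <= G v s x.
Proof. by move=> s0; apply: sumr_ge0 => i _. Qed.

Lemma rev_le_price (s : signal R n) k : (forall i, 0 <= s i) ->
  is_price_idx v s k -> forall l, revenue v s l <= revenue v s k.
Proof.
move=> s0 /price_spec [hk hmax _] l.
have rk0 : 0 <= revenue v s k by rewrite /revenue mulr_ge0 // ?G_ge0 // ltW.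
pose T (i : 'I_n) := (l <= i)%N && (0 < s i).
case: (boolP [exists i, T i]) => [/existsP [i0 Ti0] | /existsP hno].
  case: (@arg_minnP _ i0 T (fun j : 'I_n => nat_of_ord j) Ti0) => l' /andP[hll' hl'] hmin.
  have GE : G v s (v l) = G v s (v l').
    rewrite !Gidx [LHS]big_mkcond [RHS]big_mkcond; apply: eq_bigr => i _.
    case: (leqP l i) => hli; case: (leqP l' i) => hl'i //.
      have : ~~ (0 < s i).
        apply/negP => hs; have := hmin i; rewrite /T hli hs => /(_ isT).
        by rewrite leqNgt hl'i.
      by rewrite -leNgt => hs; apply/eqP; rewrite eq_le hs s0.
    by move: (leq_trans hll' hl'i); rewrite leqNgt hli.
  apply: le_trans (hmax _ hl'); rewrite /revenue GE ler_wpM2r ?G_ge0 //.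
  by rewrite vle.
rewrite /revenue Gidx big1 ?mulr0 // => i hli.
have : ~~ (0 < s i) by apply/negP => hs; apply: hno; exists i; rewrite /T hli hs.
by rewrite -leNgt => hs; apply/eqP; rewrite eq_le hs s0.
Qed.

Lemma eff_point (s : signal R n) j : 0 < s j ->
  (forall l, 0 < s l -> (j <= l)%N) ->
  (forall l, 0 < s l -> revenue v s l <= revenue v s j) ->
  price v s = v j /\ lowest_supp v s = v j.
Proof.
move=> hj hlow hrev; split.
  rewrite /price; case: pickP => [i /price_spec [hi _ hlt] | /(_ j) hn].
    have := hlow _ hi; rewrite leq_eqVlt => /orP[/eqP e | hji].
      by rewrite (val_inj e).
    by have := hlt _ hj hji; rewrite ltNge hrev.
  move: hn; rewrite /is_price_idx hj /=; move/negP; case; apply/andP; split.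
    by apply/forallP => l; apply/implyP; exact: hrev.
  apply/forallP => l; apply/implyP => /andP[hl]; rewrite vlt ltnNge hlow //.
rewrite /lowest_supp; case: pickP => [i /andP[hi /forallP hall] | /(_ j)].
  have := implyP (hall j) hj; rewrite vle => hij.
  by have := hlow _ hi => hji; apply/eqP; rewrite veq; apply/eqP/val_inj/eqP; rewrite eqn_leq hij hji.
rewrite hj /=; move/negP; case; apply/forallP => l; apply/implyP => hl.
by rewrite vle hlow.
Qed.

Lemma price_val (s : signal R n) : is_signal s ->
  exists2 k, is_price_idx v s k & price v s = v k.
Proof.
move=> hs; rewrite /price; case: pickP => [k hk | hn]; first by exists k.
by have [k hk] := price_exists hs; have := hn k; rewrite hk.
Qed.

Definition cnd (q : signal R n * R) (i j : 'I_n) : bool :=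
  ((price v q.1 == v j) && (v j <= v i)) || ((i == j) && (v i < price v q.1)).

Lemma cnd_sum q k i (h : 'I_n -> R) : price v q.1 = v k ->
  \sum_j (if cnd q i j then h j else 0) = if (k <= i)%N then h k else h i.
Proof.
move=> hp; rewrite /cnd hp.
case: (leqP k i) => hki.
  rewrite (bigD1 k) //= eqxx vle hki /= big1 ?addr0 // => j hj.
  by rewrite veq eq_sym (negbTE hj) /= vlt ltnNge hki andbF.
rewrite (bigD1 i) //= eqxx vlt hki orbT big1 ?addr0 // => j hj.
rewrite veq vle (eq_sym i) (negbTE hj) /= orbF.
by case: (k =P j) => // e; rewrite -e leqNgt hki.
Qed.

Variable Z : scheme R n.
Hypothesis hZ : forall q, q \in Z -> 0 <= q.2 /\ is_signal q.1.

Definition M (j i : 'I_n) : R :=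
  \sum_(q <- Z) (if cnd q i j then q.2 * q.1 i else 0).

Lemma term_ge0 q i : q \in Z -> 0 <= q.2 * q.1 i.
Proof. by case/hZ => h1 [h2 _]; rewrite mulr_ge0. Qed.

Lemma M_ge0 j i : 0 <= M j i.
Proof.
rewrite /M big_seq; apply: sumr_ge0 => q hq; case: ifP => // _.
exact: term_ge0.
Qed.

Lemma Msum i : \sum_j M j i = \sum_(q <- Z) q.2 * q.1 i.
Proof.
rewrite /M exchange_big /= big_seq [RHS]big_seq; apply: eq_bigr => q hq.
have [k _ hk] := price_val (proj2 (hZ hq)).
by rewrite (cnd_sum i (fun _ => q.2 * q.1 i) hk); case: ifP.
Qed.

Lemma Mlow (j i : 'I_n) : (i < j)%N -> M j i = 0.
Proof.
move=> hij; rewrite /M big1 // => q _; rewrite /cnd vle leqNgt hij andbF /=.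
by case: (i =P j) => // e; move: hij; rewrite e ltnn.
Qed.

Lemma M0 j i : ~~ (0 < M j j) -> M j i = 0.
Proof.
move=> hn; have Mjj : M j j = 0 by apply/eqP; rewrite eq_le M_ge0 andbT leNgt.
case: (i =P j) => [-> // | hij].
move: Mjj; rewrite /M big_seq_cond => /eqP; rewrite psumr_eq0; last first.
  by move=> q /andP[hq _]; case: ifP => // _; exact: term_ge0.
move/allP => hall; rewrite big_seq big1 // => q hq.
have := hall q hq; rewrite hq /= => H.
case: ifP => // hc.
have [k hk hp] := price_val (proj2 (hZ hq)).
have hpj : price v q.1 = v j.
  by move: hc; rewrite /cnd => /orP[/andP[/eqP e _] // | /andP[/eqP e _]]; case: hij.
have ejk : k = j by apply/eqP; rewrite -veq -hp hpj.
have hcj : cnd q j j by rewrite /cnd hpj eqxx lexx.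
move: H; rewrite hcj mulf_eq0 => /orP[/eqP -> | /eqP e]; first by rewrite mul0r.
by have [hs _ _] := price_spec hk; move: hs; rewrite ejk e ltxx.
Qed.

Lemma Mrev (j l : 'I_n) : (j < l)%N ->
  v l * \sum_(i : 'I_n | (l <= i)%N) M j i <=
  v j * \sum_(i : 'I_n | (j <= i)%N) M j i.
Proof.
move=> hjl.
have E1 : \sum_(i : 'I_n | (l <= i)%N) M j i =
    \sum_(q <- Z) (if price v q.1 == v j then q.2 * G v q.1 (v l) else 0).
  rewrite /M exchange_big /=; apply: eq_bigr => q _.
  case: eqP => hp.
    rewrite Gidx mulr_sumr; apply: eq_bigr => i hli.
    by rewrite /cnd hp eqxx vle (leq_trans (ltnW hjl) hli).
  rewrite big1 // => i hli; rewrite /cnd.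
  have -> : (price v q.1 == v j) = false by apply/eqP.
  case: (i =P j) => //= e; move: hli; rewrite e leqNgt hjl //.
have E2 : \sum_(q <- Z) (if price v q.1 == v j then q.2 * G v q.1 (v j) else 0)
    <= \sum_(i : 'I_n | (j <= i)%N) M j i.
  rewrite /M exchange_big /= big_seq [X in _ <= X]big_seq.
  apply: ler_sum => q hq; case: eqP => hp.
    rewrite Gidx mulr_sumr le_eqVlt; apply/orP; left; apply/eqP.
    by apply: eq_bigr => i hji; rewrite /cnd hp eqxx vle hji.
  by apply: sumr_ge0 => i _; case: ifP => // _; exact: term_ge0.
rewrite E1; apply: le_trans (ler_wpM2l (ltW (vpos j)) E2).
rewrite !mulr_sumr big_seq [X in _ <= X]big_seq; apply: ler_sum => q hq.
case: eqP => hp; last by rewrite !mulr0.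
have [k hk hpk] := price_val (proj2 (hZ hq)).
have ejk : k = j by apply/eqP; rewrite -veq -hpk hp.
rewrite mulrCA [X in _ <= X]mulrCA; apply: ler_wpM2l; first by case: (hZ hq).
have := rev_le_price (proj1 (proj2 (hZ hq))) hk l.
by rewrite /revenue ejk.
Qed.

Definition W (j : 'I_n) := \sum_i M j i.
Definition sig (j : 'I_n) : signal R n :=
  if 0 < M j j then [ffun i => M j i / W j] else [ffun i => (i == j)%:R].
Definition wt (j : 'I_n) := if 0 < M j j then W j else 0.

Lemma W_pos j : 0 < M j j -> 0 < W j.
Proof.
move=> h; rewrite /W (bigD1 j) //=; apply: (lt_le_trans h).
by rewrite lerDl; apply: sumr_ge0 => i _; exact: M_ge0.
Qed.

Lemma wt_eq j : wt j = W j.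
Proof.
rewrite /wt; case: ifP => // /negbT h.
by rewrite /W big1 // => i _; rewrite M0.
Qed.

Lemma wt_sig j i : wt j * sig j i = M j i.
Proof.
rewrite /wt /sig; case: ifP => [h | /negbT h]; last by rewrite mul0r M0.
by rewrite ffunE mulrC -mulrA mulVf ?mulr1 // gt_eqF // W_pos.
Qed.

Lemma sig_signal j : is_signal (sig j).
Proof.
rewrite /sig; case: ifP => h; split.
- by move=> i; rewrite ffunE divr_ge0 // ?M_ge0 // ltW // W_pos.
- rewrite (eq_bigr (fun i => M j i * (W j)^-1)) => [|i _]; last by rewrite ffunE.
  by rewrite -mulr_suml mulfV // gt_eqF // W_pos.
- by move=> i; rewrite ffunE ler0n.
- rewrite (bigD1 j) //= ffunE eqxx big1 ?addr0 // => i hi.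
  by rewrite ffunE (negbTE hi).
Qed.

Lemma sig_eff j : price v (sig j) = v j /\ lowest_supp v (sig j) = v j.
Proof.
rewrite /sig; case: ifP => h.
  have Wp := W_pos h.
  have hlow : forall l, 0 < [ffun i => M j i / W j] l -> (j <= l)%N.
    move=> l; rewrite leqNgt; apply: contraTN => hl.
    by rewrite ffunE Mlow // mul0r ltxx.
  apply: eff_point => //; first by rewrite ffunE divr_gt0.
  move=> l hl; have := hlow _ hl; rewrite leq_eqVlt => /orP[/eqP e|hjl].
    by rewrite (val_inj e).
  rewrite /revenue !Gidx.
  rewrite (eq_bigr (fun i => M j i * (W j)^-1)) => [|i _]; last by rewrite ffunE.
  rewrite [X in _ <= _ * X](eq_bigr (fun i => M j i * (W j)^-1)) => [|i _]; last by rewrite ffunE.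
  rewrite -!mulr_suml !mulrA; apply: ler_wpM2r; first by rewrite invr_ge0 ltW.
  exact: Mrev.
have hs : forall l, 0 < [ffun i => (i == j)%:R : R] l -> l = j.
  by move=> l; rewrite ffunE; case: (l =P j) => // _; rewrite ltxx.
apply: eff_point.
- by rewrite ffunE eqxx ltr01.
- by move=> l /hs ->.
- by move=> l /hs ->.
Qed.

Lemma main (f : 'I_n -> R) : \sum_i f i = 1 ->
  is_scheme f Z ->
  exists ZE : scheme R n,
    [/\ is_scheme f ZE,
        efficient v ZE,
        (forall i, cs_scheme v f ZE i = cs_scheme v f Z i),
        (size ZE <= n)%N &
        uniq [seq lowest_supp v q.1 | q <- ZE]].
Proof.
move=> hf1 [_ [_ hf3]].
exists [seq (sig j, wt j) | j <- enum 'I_n]; split.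
- split; [|split].
  + move=> q /mapP [j _ ->] /=; split; last exact: sig_signal.
    by rewrite wt_eq /W; apply: sumr_ge0 => i _; exact: M_ge0.
  + rewrite big_map big_enum /=.
    rewrite (eq_bigr (fun j => W j)) => [|j _]; last exact: wt_eq.
    rewrite /W exchange_big /= -hf1; apply: eq_bigr => i _.
    by rewrite Msum hf3.
  + move=> i; rewrite big_map big_enum /=.
    rewrite (eq_bigr (fun j => M j i)) => [|j _]; last exact: wt_sig.
    by rewrite Msum hf3.
- by move=> q /mapP [j _ ->] /=; case: (sig_eff j) => -> ->.
- move=> i; rewrite /cs_scheme big_map big_enum /= -!mulr_suml; congr (_ * _).
  rewrite (eq_bigr (fun j => (if v j <= v i then v i - v j else 0) * M j i))
    => [|j _]; last by rewrite -mulrA wt_sig /cs (proj1 (sig_eff j)).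
  rewrite /M; rewrite (eq_bigr (fun j => \sum_(q <- Z)
     (if cnd q i j then (if v j <= v i then v i - v j else 0) * (q.2 * q.1 i) else 0)))
    => [|j _]; last first.
    by rewrite mulr_sumr; apply: eq_bigr => q _; case: (cnd q i j); rewrite ?mulr0.
  rewrite exchange_big /= big_seq [RHS]big_seq; apply: eq_bigr => q hq.
  have [k _ hk] := price_val (proj2 (hZ hq)).
  rewrite (cnd_sum i (fun j => (if v j <= v i then v i - v j else 0) * (q.2 * q.1 i)) hk).
  rewrite /cs hk !vle leqnn; case: leqP => _; first by rewrite mulrA.
  by rewrite subrr !mul0r.
- by rewrite size_map size_enum_ord.
- rewrite -map_comp (eq_map (g := v)) => [|j]; last by rewrite /= (proj2 (sig_eff j)).
  rewrite map_inj_uniq ?enum_uniq // => a b /eqP; rewrite veq => /eqP.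
  done.
Qed.
End S.
End Aux.

Theorem lemma9 (R : realFieldType) (n : nat) (v f : 'I_n -> R) :
  (forall i, 0 < v i) ->
  (forall i j : 'I_n, (i < j)%N -> v i < v j) ->
  (forall i, 0 < f i) ->
  \sum_i f i = 1 ->
  forall Z : scheme R n, is_scheme f Z ->
  exists ZE : scheme R n,
    [/\ is_scheme f ZE,
        efficient v ZE,
        (forall i, cs_scheme v f ZE i = cs_scheme v f Z i),
        (size ZE <= n)%N &
        uniq [seq lowest_supp v q.1 | q <- ZE]].
Proof.
move=> vpos vmono fpos hf1 Z hZ.
exact: (Aux.main vpos vmono (proj1 hZ) hf1 hZ).
Qed.
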